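(* Let $M\in\mathbb{R}_+^{p\times q}$ be a nonnegative matrix. Then $M$ is a slack matrix of a polyhedral cone if and only if $$\{x^TM : x\in\mathbb{R}_+^p\}=\{x^TM : x\in\mathbb{R}^p\}\cap\mathbb{R}_+^q,$$ i.e., the cone spanned by the rows of $M$ coincides with the set of nonnegative vectors in the row span of $M$.
   Context: $\mathbb{R}_+$ denotes the nonnegative reals. A matrix $S\in\mathbb{R}^{p\times q}$ is a slack matrix of a polyhedral cone $K\subseteq\mathbb{R}^n$ if there are matrices $A\in\mathbb{R}^{p\times n}$ and $B\in\mathbb{R}^{n\times q}$ with $K=\{x\in\mathbb{R}^n: x^TB\ge 0\}=\{y^TA: y\in\mathbb{R}_+^p\}$ (the columns of $B$ give an $\mathcal{H}$-representation and the rows of $A$ a $\mathcal{V}$-representation of $K$) and $S=AB$. A matrix is a slack matrix of a polyhedral cone if it is a slack matrix of some polyhedral cone $K$ (in some $\mathbb{R}^n$). *)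

(* Defs.v *)
From mathcomp Require Import all_boot all_order all_algebra.
From mathcomp Require Import reals.
Set Implicit Arguments. Unset Strict Implicit. Unset Printing Implicit Defensive.
Import Order.TTheory GRing.Theory Num.Theory.
Local Open Scope ring_scope.

Definition nonneg_mx (R : realType) (m n : nat) (M : 'M[R]_(m, n)) : Prop :=
  forall i j, 0 <= M i j.

(* S is a slack matrix of a polyhedral cone K in R^n: there are A (p x n),
   B (n x q) with K = {x : x^T B >= 0} = {y^T A : y >= 0} and S = A B.
   Row vectors 'rV_n represent x^T. *)
Definition is_slack_matrix_of_cone (R : realType) (p q : nat)
    (S : 'M[R]_(p, q)) : Prop :=
  exists (n : nat) (A : 'M[R]_(p, n)) (B : 'M[R]_(n, q)),
    (forall x : 'rV[R]_n,
        nonneg_mx (x *m B) <-> exists y : 'rV[R]_p, nonneg_mx y /\ x = y *m A)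
    /\ S = A *m B.

(* Main.v *)
Require Import Defs.
From mathcomp Require Import all_boot all_order all_algebra.
From mathcomp Require Import reals.
Import Order.TTheory GRing.Theory Num.Theory.
Local Open Scope ring_scope.

Theorem theorem2p1 (R : realType) (p q : nat) (M : 'M[R]_(p, q)) :
  nonneg_mx M ->
  (is_slack_matrix_of_cone M <->
   (forall v : 'rV[R]_q,
      (exists x : 'rV[R]_p, nonneg_mx x /\ v = x *m M) <->
      ((exists x : 'rV[R]_p, v = x *m M) /\ nonneg_mx v))).
Proof.
move=> _; split.
- move=> [n [A [B [HK ->]]]] v; split.
  + move=> [x [x0 ->]]; split; first by exists x.
    rewrite mulmxA; apply/HK; by exists x.
  + move=> [[x ->] hv]; move: hv; rewrite mulmxA => /HK [y [y0 hy]].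
    by exists y; rewrite mulmxA hy.
- move=> H.
  have sub : (M <= row_base M)%MS by rewrite eq_row_base submx_refl.
  exists (\rank M), (M *m pinvmx (row_base M)), (row_base M); split;
    last by rewrite mulmxKpV.
  move=> x; split.
  + move=> hx.
    have : (x *m row_base M <= M)%MS by rewrite (submx_trans (submxMl _ _)) // eq_row_base.
    move=> /submxP [z hz].
    have [y [y0 hy]] : exists y, nonneg_mx y /\ x *m row_base M = y *m M.
      by apply/H; split => //; exists z.
    exists y; split => //; apply: (row_free_inj (row_base_free M)).
    by rewrite /= hy -mulmxA mulmxKpV.
  + move=> [y [y0 ->]]; rewrite -mulmxA mulmxKpV //.
    by have [h _] := H (y *m M); apply: (h _).2; exists y.
Qed.
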